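(* Let $n\ge 2$ and let $\gamma:I\to\mathbb{R}^2$ ($0\in I$) be a front without inflection points with $\gamma'(0)=\mathbf{0}$. If $t=0$ is a singular point of each of $Ev(\gamma),Ev^2(\gamma),\dots,Ev^{n-1}(\gamma)$, then $\gamma$ is not $\mathcal{A}$-equivalent to $Cusp_{(n,n+1)}(t)=(t^n,t^{n+1})$ at $t=0$.
   Context: A $C^\infty$ curve $\gamma:I\to\mathbb{R}^2$ is a front if there is a $C^\infty$ map $\nu:I\to S^1$ with $\gamma'\cdot\nu=0$ and $(\gamma,\nu)$ an immersion. With $M$ the anticlockwise rotation by $\pi/2$, $\mu=M(\nu)$, $\ell=\nu'\cdot\mu$, $\beta=\gamma'\cdot\mu$; no inflection points means $\ell\neq0$ on $I$. Evolutes: $\beta_0=\beta$, $\beta_k=\frac{d}{dt}(\beta_{k-1}/\ell)$, $Ev^0(\gamma)=\gamma$, $Ev^{k}(\gamma)=Ev^{k-1}(\gamma)-\frac{\beta_{k-1}}{\ell}M^{k-1}(\nu)$, $Ev=Ev^1$. A point is singular for a curve if its derivative vanishes there. $\mathcal{A}$-equivalence means equivalence via $C^\infty$ diffeomorphism germs of source and target. *)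

(* Defs.v *)
From Stdlib Require Import Reals Lra List.
From Coquelicot Require Import Coquelicot.
Open Scope R_scope.

Definition in_I (a b : Rbar) (t : R) : Prop := Rbar_lt a t /\ Rbar_lt t b.

Definition smooth_on (a b : Rbar) (f : R -> R) : Prop :=
  forall (k : nat) (t : R), in_I a b t -> ex_derive (Derive_n f k) t.

Definition smooth_near (x : R) (f : R -> R) : Prop :=
  locally x (fun t => forall k : nat, ex_derive (Derive_n f k) t).

(** Partial derivatives of F : R^2 -> R (true = first variable). *)
Definition pd (b : bool) (F : R * R -> R) : R * R -> R :=
  fun p => if b then Derive (fun s => F (s, snd p)) (fst p)
           else Derive (fun s => F (fst p, s)) (snd p).

Definition pds (ds : list bool) (F : R * R -> R) : R * R -> R :=
  fold_right pd F ds.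

Definition smooth2_near (p : R * R) (F : R * R -> R) : Prop :=
  locally p (fun q => forall ds : list bool,
    continuous (pds ds F) q /\
    ex_derive (fun s => pds ds F (s, snd q)) (fst q) /\
    ex_derive (fun s => pds ds F (fst q, s)) (snd q)).

Definition diffeo_germ1 (phi : R -> R) : Prop :=
  phi 0 = 0 /\ smooth_near 0 phi /\
  exists psi : R -> R, smooth_near 0 psi /\
    locally 0 (fun t => psi (phi t) = t) /\
    locally 0 (fun s => phi (psi s) = s).

Definition diffeo_germ2 (p q : R * R) (Phi : R * R -> R * R) : Prop :=
  Phi p = q /\
  smooth2_near p (fun x => fst (Phi x)) /\ smooth2_near p (fun x => snd (Phi x)) /\
  exists Psi : R * R -> R * R,
    smooth2_near q (fun y => fst (Psi y)) /\ smooth2_near q (fun y => snd (Psi y)) /\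
    locally p (fun x => Psi (Phi x) = x) /\
    locally q (fun y => Phi (Psi y) = y).

Definition A_equiv_at0 (f g : R -> R * R) : Prop :=
  exists (phi : R -> R) (Phi : R * R -> R * R),
    diffeo_germ1 phi /\ diffeo_germ2 (f 0) (g 0) Phi /\
    locally 0 (fun t => Phi (f t) = g (phi t)).

Definition Cusp (n : nat) : R -> R * R := fun t => (t ^ n, t ^ (n + 1)).

Definition Mrot (v : R * R) : R * R := (- snd v, fst v).
Fixpoint Mpow (k : nat) (v : R * R) : R * R :=
  match k with O => v | S k' => Mrot (Mpow k' v) end.

Definition dot (u v : R * R) : R := fst u * fst v + snd u * snd v.

(** Curve gamma = (g1,g2), unit normal nu = (n1,n2). *)
Definition dcurve (f1 f2 : R -> R) (t : R) : R * R := (Derive f1 t, Derive f2 t).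
Definition nuv (n1 n2 : R -> R) (t : R) : R * R := (n1 t, n2 t).
Definition muv (n1 n2 : R -> R) (t : R) : R * R := Mrot (nuv n1 n2 t).

Definition ell (n1 n2 : R -> R) (t : R) : R := dot (dcurve n1 n2 t) (muv n1 n2 t).
Definition beta (g1 g2 n1 n2 : R -> R) (t : R) : R :=
  dot (dcurve g1 g2 t) (muv n1 n2 t).

Fixpoint betak (g1 g2 n1 n2 : R -> R) (k : nat) : R -> R :=
  match k with
  | O => beta g1 g2 n1 n2
  | S k' => Derive (fun t => betak g1 g2 n1 n2 k' t / ell n1 n2 t)
  end.

Fixpoint Ev (g1 g2 n1 n2 : R -> R) (k : nat) : R -> R * R :=
  match k with
  | O => fun t => (g1 t, g2 t)
  | S k' => fun t =>
      let c := betak g1 g2 n1 n2 k' t / ell n1 n2 t in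
      let w := Mpow k' (nuv n1 n2 t) in
      (fst (Ev g1 g2 n1 n2 k' t) - c * fst w, snd (Ev g1 g2 n1 n2 k' t) - c * snd w)
  end.

Definition singular_at (c : R -> R * R) (t : R) : Prop :=
  Derive (fun s => fst (c s)) t = 0 /\ Derive (fun s => snd (c s)) t = 0.

Definition front_with (a b : Rbar) (g1 g2 n1 n2 : R -> R) : Prop :=
  smooth_on a b g1 /\ smooth_on a b g2 /\ smooth_on a b n1 /\ smooth_on a b n2 /\
  (forall t, in_I a b t -> n1 t ^ 2 + n2 t ^ 2 = 1) /\
  (forall t, in_I a b t -> dot (dcurve g1 g2 t) (nuv n1 n2 t) = 0) /\
  (forall t, in_I a b t ->
     ~ (Derive g1 t = 0 /\ Derive g2 t = 0 /\ Derive n1 t = 0 /\ Derive n2 t = 0)).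

(* Main.v *)
Require Import Defs.
From Stdlib Require Import Reals Lra Lia.
From Coquelicot Require Import Coquelicot.
Open Scope R_scope.

Lemma ballR (x e y : R) : ball x e y <-> Rabs (y - x) < e.
Proof. split; intro H; exact H. Qed.

Lemma der_mult (f g : R -> R) x df dg : is_derive f x df -> is_derive g x dg ->
  is_derive (fun t => f t * g t) x (df * g x + f x * dg).
Proof. intros. apply (is_derive_mult f g x df dg); auto. intros; apply Rmult_comm. Qed.
Lemma der_plus (f g : R -> R) x df dg : is_derive f x df -> is_derive g x dg ->
  is_derive (fun t => f t + g t) x (df + dg).
Proof. intros. apply (is_derive_plus f g x df dg); auto. Qed.
Lemma der_minus (f g : R -> R) x df dg : is_derive f x df -> is_derive g x dg ->
  is_derive (fun t => f t - g t) x (df - dg).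
Proof. intros. apply (is_derive_minus f g x df dg); auto. Qed.
Lemma der_opp (f : R -> R) x df : is_derive f x df ->
  is_derive (fun t => - f t) x (- df).
Proof. intros. apply (is_derive_opp f x df); auto. Qed.
Lemma der_val (f : R -> R) x d d' : is_derive f x d -> d = d' -> is_derive f x d'.
Proof. intros; subst; auto. Qed.

Lemma MVT_bound (f : R -> R) a b K :
  (forall x, Rmin a b <= x <= Rmax a b -> ex_derive f x /\ Rabs (Derive f x) <= K) ->
  Rabs (f b - f a) <= K * Rabs (b - a).
Proof.
  intros H.
  destruct (MVT_gen f a b (Derive f)) as [c [Hc Hf]].
  - intros x Hx. apply Derive_correct. apply H. lra.
  - intros x Hx. apply continuity_pt_filterlim. apply (ex_derive_continuous (K:=R_AbsRing) (V:=R_NormedModule)). apply H; lra.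
  - rewrite Hf, Rabs_mult. apply Rmult_le_compat_r. apply Rabs_pos. apply H; lra.
Qed.

Fixpoint Ck (U : R -> Prop) (m : nat) (f : R -> R) : Prop :=
  match m with
  | O => True
  | S m' => exists f', (forall t, U t -> is_derive f t (f' t)) /\ Ck U m' f'
  end.
Definition Cinf U f := forall m, Ck U m f.

Lemma Ck_mono U m f : Ck U (S m) f -> Ck U m f.
Proof.
  revert f; induction m; simpl; intros f H; auto.
  destruct H as [f' [H1 H2]]. exists f'; split; auto.
Qed.

Lemma Ck_ext U (HU : open U) m f g : (forall t, U t -> f t = g t) -> Ck U m f -> Ck U m g.
Proof.
  destruct m; simpl; auto. intros He [f' [H1 H2]]. exists f'; split; auto.
  intros t Ht. apply is_derive_ext_loc with f; auto.
  destruct (HU t Ht) as [e He']. exists e. intros y Hy. apply He, He', Hy.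
Qed.

Lemma Ck_plus U m f g : Ck U m f -> Ck U m g -> Ck U m (fun t => f t + g t).
Proof.
  revert f g; induction m; simpl; auto. intros f g [f' [F1 F2]] [g' [G1 G2]].
  exists (fun t => f' t + g' t); split; auto. intros; apply der_plus; auto.
Qed.

Lemma Ck_opp U m f : Ck U m f -> Ck U m (fun t => - f t).
Proof.
  revert f; induction m; simpl; auto. intros f [f' [F1 F2]].
  exists (fun t => - f' t); split; auto. intros; apply der_opp; auto.
Qed.

Lemma Ck_mult U m f g : Ck U m f -> Ck U m g -> Ck U m (fun t => f t * g t).
Proof.
  revert f g; induction m; intros f g; simpl; auto. intros Hf Hg.
  pose proof (Ck_mono U m f Hf) as Hf0. pose proof (Ck_mono U m g Hg) as Hg0.
  destruct Hf as [f' [F1 F2]]. destruct Hg as [g' [G1 G2]].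
  exists (fun t => f' t * g t + f t * g' t); split.
  intros; apply der_mult; auto.
  apply Ck_plus; apply IHm; auto.
Qed.

Lemma Ck_inv U m f : (forall t, U t -> f t <> 0) -> Ck U m f -> Ck U m (fun t => / f t).
Proof.
  intros Hnz; revert f Hnz; induction m; intros f Hnz; simpl; auto. intros Hf.
  pose proof (Ck_mono U m f Hf) as Hf0.
  destruct Hf as [f' [F1 F2]].
  exists (fun t => - (f' t * (/ f t * / f t))); split.
  intros t Ht. eapply der_val. apply is_derive_inv. apply F1; auto. auto. match goal with |- ?x = ?y => change (@eq R x y) end; field; auto. auto.
  apply Ck_opp. apply Ck_mult; auto. apply Ck_mult; apply IHm; auto.
Qed.

Lemma Cinf_plus U f g : Cinf U f -> Cinf U g -> Cinf U (fun t => f t + g t).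
Proof. intros H1 H2 m; apply Ck_plus; auto. Qed.
Lemma Cinf_opp U f : Cinf U f -> Cinf U (fun t => - f t).
Proof. intros H1 m; apply Ck_opp; auto. Qed.
Lemma Cinf_mult U f g : Cinf U f -> Cinf U g -> Cinf U (fun t => f t * g t).
Proof. intros H1 H2 m; apply Ck_mult; auto. Qed.
Lemma Cinf_inv U f : (forall t, U t -> f t <> 0) -> Cinf U f -> Cinf U (fun t => / f t).
Proof. intros H0 H1 m; apply Ck_inv; auto. Qed.
Lemma Cinf_ext U (HU : open U) f g : (forall t, U t -> f t = g t) -> Cinf U f -> Cinf U g.
Proof. intros H0 H1 m; eapply Ck_ext; eauto. Qed.

Lemma Cinf_ex_derive U f t : Cinf U f -> U t -> ex_derive f t.
Proof. intros H Ht. destruct (H 1%nat) as [f' [H1 _]]. exists (f' t); auto. Qed.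

Lemma Cinf_Derive U (HU : open U) f : Cinf U f -> Cinf U (Derive f).
Proof.
  intros H m. destruct (H (S m)) as [f' [H1 H2]].
  apply Ck_ext with f'; auto. intros t Ht. symmetry; apply is_derive_unique; auto.
Qed.

Lemma Cinf_smooth a b f : smooth_on a b f -> Cinf (in_I a b) f.
Proof.
  intros H m. assert (forall k, Ck (in_I a b) m (Derive_n f k)).
  { induction m; simpl; auto. intros k. exists (Derive_n f (S k)); split; auto.
    intros t Ht. apply Derive_correct. apply H; auto. }
  apply (H0 0%nat).
Qed.

Lemma open_I a b : open (in_I a b).
Proof. apply open_and. apply open_Rbar_gt. apply open_Rbar_lt. Qed.

Lemma Mpow_scal k c x y :
  Mpow k (c * x, c * y) = (c * fst (Mpow k (x, y)), c * snd (Mpow k (x, y))).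
Proof.
  induction k; simpl. reflexivity. rewrite IHk. unfold Mrot; simpl. f_equal; ring.
Qed.
Lemma Mpow_rot k v : Mpow k (Mrot v) = Mpow (S k) v.
Proof. induction k; simpl; auto. rewrite IHk. reflexivity. Qed.
Lemma fst_Mpow_SS k v : fst (Mpow (S (S k)) v) = - fst (Mpow k v).
Proof. simpl. unfold Mrot; simpl. reflexivity. Qed.
Lemma snd_Mpow_SS k v : snd (Mpow (S (S k)) v) = - snd (Mpow k v).
Proof. simpl. unfold Mrot; simpl. reflexivity. Qed.
Lemma Mpow_norm k v : fst (Mpow k v) ^ 2 + snd (Mpow k v) ^ 2 = fst v ^ 2 + snd v ^ 2.
Proof. induction k. reflexivity. rewrite <- IHk. change (Mpow (S k) v) with (Mrot (Mpow k v)). destruct (Mpow k v) as [x y]. unfold Mrot; simpl. ring. Qed.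

Lemma Mpow_der (n1 n2 : R -> R) t d1 d2 k :
  is_derive n1 t d1 -> is_derive n2 t d2 ->
  is_derive (fun s => fst (Mpow k (nuv n1 n2 s))) t (fst (Mpow k (d1, d2))) /\
  is_derive (fun s => snd (Mpow k (nuv n1 n2 s))) t (snd (Mpow k (d1, d2))).
Proof.
  intros H1 H2. induction k; simpl. auto.
  unfold Mrot; simpl. destruct IHk as [A1 A2]. split; auto.
  apply der_opp; auto.
Qed.


Lemma front_facts a b g1 g2 n1 n2 t :
  front_with a b g1 g2 n1 n2 -> in_I a b t ->
  Derive n1 t = ell n1 n2 t * - n2 t /\ Derive n2 t = ell n1 n2 t * n1 t /\
  Derive g1 t = beta g1 g2 n1 n2 t * - n2 t /\ Derive g2 t = beta g1 g2 n1 n2 t * n1 t /\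
  n1 t ^ 2 + n2 t ^ 2 = 1.
Proof.
  intros [S1 [S2 [S3 [S4 [Hn [Hd _]]]]]] Ht.
  pose proof (Hn t Ht) as N. pose proof (Hd t Ht) as D.
  unfold dot, dcurve, nuv in D; simpl in D.
  assert (C1 := Cinf_smooth _ _ _ S3). assert (C2 := Cinf_smooth _ _ _ S4).
  assert (E1 := Cinf_ex_derive _ _ _ C1 Ht). assert (E2 := Cinf_ex_derive _ _ _ C2 Ht).
  assert (ND : Derive n1 t * n1 t + Derive n2 t * n2 t = 0).
  { assert (K1 : is_derive (fun s => n1 s * n1 s + n2 s * n2 s) t
       (Derive n1 t * n1 t + n1 t * Derive n1 t + (Derive n2 t * n2 t + n2 t * Derive n2 t))).
    { apply der_plus; apply der_mult; apply Derive_correct; auto. }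
    assert (K2 : is_derive (fun s => n1 s * n1 s + n2 s * n2 s) t 0).
    { apply is_derive_ext_loc with (fun _ => 1).
      destruct (open_I a b t Ht) as [e He]. exists e. intros y Hy.
      specialize (Hn y (He y Hy)). simpl in Hn. lra.
      apply (is_derive_const (K:=R_AbsRing) (V:=R_NormedModule)). }
    apply is_derive_unique in K1. apply is_derive_unique in K2.
    rewrite K1 in K2. lra. }
  unfold ell, beta, dot, dcurve, muv, nuv, Mrot; simpl.
  simpl in N.
  repeat split.
  - assert (Derive n1 t * (n1 t * (n1 t * 1) + n2 t * (n2 t * 1)) = Derive n1 t) by (rewrite N; ring).
    assert (n1 t * (Derive n1 t * n1 t + Derive n2 t * n2 t) = 0) by (rewrite ND; ring). lra.
  - assert (Derive n2 t * (n1 t * (n1 t * 1) + n2 t * (n2 t * 1)) = Derive n2 t) by (rewrite N; ring).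
    assert (n2 t * (Derive n1 t * n1 t + Derive n2 t * n2 t) = 0) by (rewrite ND; ring). lra.
  - assert (Derive g1 t * (n1 t * (n1 t * 1) + n2 t * (n2 t * 1)) = Derive g1 t) by (rewrite N; ring).
    assert (n1 t * (Derive g1 t * n1 t + Derive g2 t * n2 t) = 0) by (rewrite D; ring). lra.
  - assert (Derive g2 t * (n1 t * (n1 t * 1) + n2 t * (n2 t * 1)) = Derive g2 t) by (rewrite N; ring).
    assert (n2 t * (Derive g1 t * n1 t + Derive g2 t * n2 t) = 0) by (rewrite D; ring). lra.
  - simpl; lra.
Qed.

Lemma Cinf_ell a b g1 g2 n1 n2 : front_with a b g1 g2 n1 n2 -> Cinf (in_I a b) (ell n1 n2).
Proof.
  intros [S1 [S2 [S3 [S4 _]]]].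
  pose proof (open_I a b) as HU.
  assert (Cinf (in_I a b) (fun t => Derive n1 t * - n2 t + Derive n2 t * n1 t)).
  { apply Cinf_plus; apply Cinf_mult; try apply Cinf_opp; try apply Cinf_Derive; auto;
    apply Cinf_smooth; auto. }
  exact H.
Qed.

Lemma Cinf_beta a b g1 g2 n1 n2 : front_with a b g1 g2 n1 n2 -> Cinf (in_I a b) (beta g1 g2 n1 n2).
Proof.
  intros [S1 [S2 [S3 [S4 _]]]].
  pose proof (open_I a b) as HU.
  assert (Cinf (in_I a b) (fun t => Derive g1 t * - n2 t + Derive g2 t * n1 t)).
  { apply Cinf_plus; apply Cinf_mult; try apply Cinf_opp; try apply Cinf_Derive; auto;
    apply Cinf_smooth; auto. }
  exact H.
Qed.

Lemma Cinf_quot a b g1 g2 n1 n2 k : front_with a b g1 g2 n1 n2 ->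
  (forall t, in_I a b t -> ell n1 n2 t <> 0) ->
  Cinf (in_I a b) (fun t => betak g1 g2 n1 n2 k t / ell n1 n2 t) /\
  Cinf (in_I a b) (betak g1 g2 n1 n2 k).
Proof.
  intros F Hl. pose proof (open_I a b) as HU.
  assert (Hb : Cinf (in_I a b) (betak g1 g2 n1 n2 k)).
  { induction k. apply Cinf_beta; auto.
    simpl. apply Cinf_Derive; auto. apply Cinf_mult; auto. apply Cinf_inv; auto.
    apply (Cinf_ell _ _ g1 g2); auto. }
  split; auto. apply Cinf_mult; auto. apply Cinf_inv; auto. apply (Cinf_ell _ _ g1 g2); auto.
Qed.

Lemma Ev_der a b g1 g2 n1 n2 k t : front_with a b g1 g2 n1 n2 ->
  (forall t, in_I a b t -> ell n1 n2 t <> 0) -> in_I a b t ->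
  is_derive (fun s => fst (Ev g1 g2 n1 n2 k s)) t
     (- betak g1 g2 n1 n2 k t * fst (Mpow (S (S (S k))) (nuv n1 n2 t))) /\
  is_derive (fun s => snd (Ev g1 g2 n1 n2 k s)) t
     (- betak g1 g2 n1 n2 k t * snd (Mpow (S (S (S k))) (nuv n1 n2 t))).
Proof.
  intros F Hl Ht.
  destruct (front_facts a b g1 g2 n1 n2 t F Ht) as [D1 [D2 [G1 [G2 N]]]].
  pose proof F as [S1 [S2 [S3 [S4 _]]]].
  assert (E1 := Cinf_ex_derive _ _ _ (Cinf_smooth _ _ _ S1) Ht).
  assert (E2 := Cinf_ex_derive _ _ _ (Cinf_smooth _ _ _ S2) Ht).
  assert (E3 := Cinf_ex_derive _ _ _ (Cinf_smooth _ _ _ S3) Ht).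
  assert (E4 := Cinf_ex_derive _ _ _ (Cinf_smooth _ _ _ S4) Ht).
  induction k.
  - cbn [Ev fst snd]. split.
    + eapply der_val. apply Derive_correct; auto.
      change (@eq R (Derive g1 t) (- beta g1 g2 n1 n2 t * fst (Mpow 3 (nuv n1 n2 t)))).
      rewrite G1. unfold Mrot, nuv; simpl. ring.
    + eapply der_val. apply Derive_correct; auto.
      change (@eq R (Derive g2 t) (- beta g1 g2 n1 n2 t * snd (Mpow 3 (nuv n1 n2 t)))).
      rewrite G2. unfold Mrot, nuv; simpl. ring.
  - destruct IHk as [I1 I2].
    destruct (Cinf_quot a b g1 g2 n1 n2 k F Hl) as [Q _].
    assert (Hq : is_derive (fun s => betak g1 g2 n1 n2 k s / ell n1 n2 s) t
                   (betak g1 g2 n1 n2 (S k) t)).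
    { apply Derive_correct. apply (Cinf_ex_derive _ _ _ Q Ht). }
    destruct (Mpow_der n1 n2 t _ _ k (Derive_correct _ _ E3) (Derive_correct _ _ E4)) as [M1 M2].
    pose proof (Hl t Ht) as Hlt.
    cbn [Ev fst snd]. split.
    + eapply der_val. apply der_minus. apply I1. apply der_mult. apply Hq. apply M1.
      rewrite D1, D2, Mpow_scal.
      change (- n2 t, n1 t) with (Mrot (nuv n1 n2 t)). rewrite Mpow_rot.
      rewrite !fst_Mpow_SS. match goal with |- ?x = ?y => change (@eq R x y) end. cbn [fst]. field. auto.
    + eapply der_val. apply der_minus. apply I2. apply der_mult. apply Hq. apply M2.
      rewrite D1, D2, Mpow_scal.
      change (- n2 t, n1 t) with (Mrot (nuv n1 n2 t)). rewrite Mpow_rot.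
      rewrite !snd_Mpow_SS. match goal with |- ?x = ?y => change (@eq R x y) end. cbn [fst snd]. field. auto.
Qed.

Lemma betak_zero a b g1 g2 n1 n2 k : front_with a b g1 g2 n1 n2 ->
  (forall t, in_I a b t -> ell n1 n2 t <> 0) -> in_I a b 0 ->
  singular_at (Ev g1 g2 n1 n2 k) 0 -> betak g1 g2 n1 n2 k 0 = 0.
Proof.
  intros F Hl H0 [A B].
  destruct (Ev_der a b g1 g2 n1 n2 k 0 F Hl H0) as [I1 I2].
  apply is_derive_unique in I1. apply is_derive_unique in I2.
  destruct (front_facts a b g1 g2 n1 n2 0 F H0) as [_ [_ [_ [_ N]]]].
  set (x := fst (Mpow (S (S (S k))) (nuv n1 n2 0))) in *.
  set (y := snd (Mpow (S (S (S k))) (nuv n1 n2 0))) in *.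
  set (c := betak g1 g2 n1 n2 k 0) in *.
  assert (MN : x ^ 2 + y ^ 2 = 1).
  { unfold x, y. rewrite Mpow_norm. unfold nuv. cbn [fst snd]. exact N. }
  assert (c = c * (x ^ 2 + y ^ 2)) by (rewrite MN; ring).
  assert (c * (x ^ 2 + y ^ 2) = - ((- c * x) * x + (- c * y) * y)) by ring.
  assert (A' : - c * x = 0) by (rewrite <- I1; exact A).
  assert (B' : - c * y = 0) by (rewrite <- I2; exact B).
  rewrite A', B' in H1. lra.
Qed.

Definition BigO (m : nat) (f : R -> R) : Prop :=
  exists d C, 0 < d /\ 0 <= C /\ forall s, Rabs s < d -> Rabs (f s) <= C * Rabs s ^ m.

Lemma pow_bound f d C m : 0 <= C ->
  (forall s, Rabs s < d -> ex_derive f s /\ Rabs (Derive f s) <= C * Rabs s ^ m) ->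
  forall s, Rabs s < d -> Rabs (f s - f 0) <= C * Rabs s ^ (S m).
Proof.
  intros HC H s Hs.
  assert (Rabs (f s - f 0) <= C * Rabs s ^ m * Rabs (s - 0)).
  { apply MVT_bound. intros x Hx.
    assert (Rabs x <= Rabs s).
    { unfold Rmin, Rmax in Hx. destruct (Rle_dec 0 s);
      unfold Rabs; repeat destruct Rcase_abs; lra. }
    destruct (H x) as [H1 H2]. lra. split; auto.
    eapply Rle_trans. apply H2. apply Rmult_le_compat_l; auto.
    apply pow_incr. split; auto. apply Rabs_pos. }
  rewrite Rminus_0_r in H0. replace (C * Rabs s ^ S m) with (C * Rabs s ^ m * Rabs s) by (simpl; ring). exact H0.
Qed.

Lemma cont_bound (h : R -> R) x : continuous h x ->
  exists d, 0 < d /\ forall s, Rabs (s - x) < d -> Rabs (h s) <= Rabs (h x) + 1.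
Proof.
  intros H. apply filterlim_locally with (eps := mkposreal 1 Rlt_0_1) in H.
  destruct H as [e He]. exists e; split. apply cond_pos.
  intros s Hs. specialize (He s Hs). assert (He2 : Rabs (h s - h x) < 1) by exact He.
  pose proof (Rabs_triang_inv (h s) (h x)). lra.
Qed.

Lemma loc0 (P : R -> Prop) : locally 0 P -> exists d, 0 < d /\ forall s, Rabs s < d -> P s.
Proof.
  intros [e He]. exists e; split. apply cond_pos. intros s Hs. apply He. apply ballR.
  rewrite Rminus_0_r; auto.
Qed.

Lemma step U h l f m : open U -> U 0 -> (forall s, U s -> ex_derive h s) -> h 0 = 0 ->
  continuous l 0 -> (forall s, U s -> f s = h s * l s) -> BigO m (Derive h) -> BigO (S m) f.
Proof.
  intros HU H0 Hd Hh0 Hl Hf [d [C [Hd0 [HC HB]]]].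
  destruct (loc0 U (HU 0 H0)) as [d1 [Hd1 HU1]].
  destruct (cont_bound l 0 Hl) as [d2 [Hd2 HL]].
  exists (Rmin d (Rmin d1 d2)), (C * (Rabs (l 0) + 1)). repeat split.
  - repeat apply Rmin_pos; auto.
  - apply Rmult_le_pos; auto. pose proof (Rabs_pos (l 0)); lra.
  - intros s Hs.
    assert (Hs1 : Rabs s < d) by (eapply Rlt_le_trans; [apply Hs | apply Rmin_l]).
    assert (Hs2 : Rabs s < d1) by (eapply Rlt_le_trans; [apply Hs | eapply Rle_trans; [apply Rmin_r | apply Rmin_l]]).
    assert (Hs3 : Rabs s < d2) by (eapply Rlt_le_trans; [apply Hs | eapply Rle_trans; [apply Rmin_r | apply Rmin_r]]).
    assert (Hb : Rabs (h s - h 0) <= C * Rabs s ^ S m).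
    { apply pow_bound with (Rmin d d1); auto.
      - intros x Hx. split. apply Hd, HU1. eapply Rlt_le_trans; [apply Hx | apply Rmin_r].
        apply HB. eapply Rlt_le_trans; [apply Hx | apply Rmin_l].
      - apply Rmin_case; auto. }
    rewrite Hh0, Rminus_0_r in Hb.
    rewrite Hf by auto. rewrite Rabs_mult.
    assert (Rabs (l s) <= Rabs (l 0) + 1) by (apply HL; rewrite Rminus_0_r; auto).
    replace (C * (Rabs (l 0) + 1) * Rabs s ^ S m) with ((C * Rabs s ^ S m) * (Rabs (l 0) + 1)) by ring.
    apply Rmult_le_compat; auto; apply Rabs_pos.
Qed.

Lemma Cinf_cont U f t : Cinf U f -> U t -> continuous f t.
Proof. intros H Ht. apply (ex_derive_continuous (K:=R_AbsRing) (V:=R_NormedModule)).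
  eapply Cinf_ex_derive; eauto. Qed.

Lemma bigO1 U f : open U -> U 0 -> Cinf U f -> f 0 = 0 -> BigO 1 f.
Proof.
  intros HU H0 Hf Hf0. apply step with U f (fun _ => 1); auto.
  - intros; eapply Cinf_ex_derive; eauto.
  - apply (ex_derive_continuous (K:=R_AbsRing) (V:=R_NormedModule)). exists 0.
    apply (is_derive_const (K:=R_AbsRing) (V:=R_NormedModule)).
  - intros; ring.
  - destruct (cont_bound (Derive f) 0) as [d [Hd HB]].
    apply (Cinf_cont U); auto. apply Cinf_Derive; auto.
    exists d, (Rabs (Derive f 0) + 1). repeat split; auto.
    pose proof (Rabs_pos (Derive f 0)); lra.
    intros s Hs. simpl. rewrite Rmult_1_r. apply HB. rewrite Rminus_0_r; auto.
Qed.

Lemma cont_eps (h : R -> R) x (eps : posreal) : continuous h x ->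
  exists d, 0 < d /\ forall s, Rabs (s - x) < d -> Rabs (h s - h x) < eps.
Proof.
  intros H. apply filterlim_locally with (eps := eps) in H.
  destruct H as [e He]. exists e; split. apply cond_pos.
  intros s Hs. exact (He s Hs).
Qed.

Lemma ball2 (p1 p2 y1 y2 e : R) : Rabs (y1 - p1) < e -> Rabs (y2 - p2) < e ->
  @ball (prod_UniformSpace R_UniformSpace R_UniformSpace) (p1, p2) e (y1, y2).
Proof. intros; split; assumption. Qed.

Lemma bnd2 (f : R * R -> R) p : continuous f p ->
  exists d, 0 < d /\ forall y1 y2, Rabs (y1 - fst p) < d -> Rabs (y2 - snd p) < d ->
     Rabs (f (y1, y2)) <= Rabs (f p) + 1.
Proof.
  intros H. apply filterlim_locally with (eps := mkposreal 1 Rlt_0_1) in H.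
  destruct H as [e He]. exists e; split. apply cond_pos.
  intros y1 y2 H1 H2. destruct p as [p1 p2].
  specialize (He (y1, y2) (ball2 p1 p2 y1 y2 e H1 H2)).
  assert (He2 : Rabs (f (y1, y2) - f (p1, p2)) < 1) by exact He.
  pose proof (Rabs_triang_inv (f (y1, y2)) (f (p1, p2))). lra.
Qed.

Lemma lip2 (p1 p2 : R) (F : R * R -> R) : smooth2_near (p1, p2) F ->
  exists d K, 0 < d /\ 0 <= K /\ forall x1 x2, Rabs (x1 - p1) < d -> Rabs (x2 - p2) < d ->
    Rabs (F (x1, x2) - F (p1, p2)) <= K * (Rabs (x1 - p1) + Rabs (x2 - p2)).
Proof.
  intros [e He].
  assert (Hp := He (p1, p2) (ball2 p1 p2 p1 p2 e ltac:(rewrite Rminus_eq_0, Rabs_R0; apply cond_pos)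
                   ltac:(rewrite Rminus_eq_0, Rabs_R0; apply cond_pos))).
  destruct (Hp (cons true nil)) as [Ct _]. destruct (Hp (cons false nil)) as [Cf _].
  destruct (bnd2 _ _ Ct) as [d1 [Hd1 B1]]. destruct (bnd2 _ _ Cf) as [d2 [Hd2 B2]].
  set (K1 := Rabs (pds (cons true nil) F (p1, p2)) + 1).
  set (K2 := Rabs (pds (cons false nil) F (p1, p2)) + 1).
  assert (HK1 : 0 <= K1) by (unfold K1; pose proof (Rabs_pos (pds (cons true nil) F (p1, p2))); lra).
  assert (HK2 : 0 <= K2) by (unfold K2; pose proof (Rabs_pos (pds (cons false nil) F (p1, p2))); lra).
  exists (Rmin e (Rmin d1 d2)), (K1 + K2). repeat split.
  - repeat apply Rmin_pos; auto. apply cond_pos.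
  - lra.
  - intros x1 x2 Hx1 Hx2.
    assert (Le : forall z, Rabs z < Rmin e (Rmin d1 d2) -> Rabs z < e /\ Rabs z < d1 /\ Rabs z < d2).
    { intros z Hz. repeat split; eapply Rlt_le_trans; try apply Hz.
      apply Rmin_l. eapply Rle_trans; [apply Rmin_r| apply Rmin_l].
      eapply Rle_trans; [apply Rmin_r| apply Rmin_r]. }
    assert (Between : forall a b x, Rmin a b <= x <= Rmax a b -> Rabs (x - a) <= Rabs (b - a)).
    { intros a b x Hx. unfold Rmin, Rmax in Hx. destruct (Rle_dec a b);
      unfold Rabs; repeat destruct Rcase_abs; lra. }
    destruct (Le _ Hx1) as [E1 [E1' E1'']]. destruct (Le _ Hx2) as [E2 [E2' E2'']].
    assert (A1 : Rabs (F (x1, x2) - F (p1, x2)) <= K1 * Rabs (x1 - p1)).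
    { apply (MVT_bound (fun s => F (s, x2)) p1 x1 K1). intros s Hs.
      pose proof (Between _ _ _ Hs) as Hs'.
      pose proof (He (s, x2) (ball2 p1 p2 s x2 e ltac:(lra) E2)) as Q.
      destruct (Q nil) as [_ [Ex _]]. split. exact Ex. exact (B1 s x2 ltac:(simpl; lra) E2'). }
    assert (A2 : Rabs (F (p1, x2) - F (p1, p2)) <= K2 * Rabs (x2 - p2)).
    { apply (MVT_bound (fun s => F (p1, s)) p2 x2 K2). intros s Hs.
      pose proof (Between _ _ _ Hs) as Hs'.
      assert (Hp0 : Rabs (p1 - p1) < e) by (rewrite Rminus_eq_0, Rabs_R0; apply cond_pos).
      assert (Hp1 : Rabs (p1 - p1) < d2) by (rewrite Rminus_eq_0, Rabs_R0; auto).
      pose proof (He (p1, s) (ball2 p1 p2 p1 s e Hp0 ltac:(lra))) as Q.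
      destruct (Q nil) as [_ [_ Ex]]. split. exact Ex. exact (B2 p1 s Hp1 ltac:(simpl; lra)). }
    replace (F (x1, x2) - F (p1, p2)) with ((F (x1, x2) - F (p1, x2)) + (F (p1, x2) - F (p1, p2))) by ring.
    eapply Rle_trans. apply Rabs_triang.
    pose proof (Rabs_pos (x1 - p1)). pose proof (Rabs_pos (x2 - p2)).
    assert (K1 * Rabs (x1 - p1) <= (K1 + K2) * Rabs (x1 - p1)) by (apply Rmult_le_compat_r; lra).
    assert (K2 * Rabs (x2 - p2) <= (K1 + K2) * Rabs (x2 - p2)) by (apply Rmult_le_compat_r; lra).
    lra.
Qed.

Theorem mainTheorem4 (n : nat) (a b : Rbar) (g1 g2 n1 n2 : R -> R) :
  (2 <= n)%nat ->
  Rbar_lt a 0 -> Rbar_lt 0 b ->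
  front_with a b g1 g2 n1 n2 ->
  (forall t, in_I a b t -> ell n1 n2 t <> 0) ->
  singular_at (fun t => (g1 t, g2 t)) 0 ->
  (forall k : nat, (1 <= k <= n - 1)%nat -> singular_at (Ev g1 g2 n1 n2 k) 0) ->
  ~ A_equiv_at0 (fun t => (g1 t, g2 t)) (Cusp n).
Proof.
  intros Hn Ha Hb F Hl Hsing HEv HA.
  assert (U0 : in_I a b 0) by (split; auto).
  pose proof (open_I a b) as HU.
  destruct HA as [phi [Phi [[Hphi0 [Hphis [psi [Hpsis [Hpsiphi Hphipsi]]]]] [[HP0 [HP1 [HP2 _]]] Heq]]]].
  assert (Hz : forall k, (k < n)%nat -> betak g1 g2 n1 n2 k 0 = 0).
  { intros [|k] Hk.
    - destruct Hsing as [A B]. change (Derive g1 0 = 0) in A. change (Derive g2 0 = 0) in B.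
      change (Derive g1 0 * - n2 0 + Derive g2 0 * n1 0 = 0). rewrite A, B; ring.
    - apply (betak_zero a b); auto. apply HEv. lia. }
  assert (Hdesc : forall i, (i < n)%nat -> BigO (S i) (betak g1 g2 n1 n2 (n - 1 - i))).
  { induction i; intros Hi.
    - replace (n - 1 - 0)%nat with (n - 1)%nat by lia.
      apply (bigO1 (in_I a b)); auto. apply (Cinf_quot a b g1 g2 n1 n2); auto.
      apply Hz; lia.
    - set (j := (n - 1 - S i)%nat).
      assert (Ej : (n - 1 - i)%nat = S j) by (unfold j; lia).
      specialize (IHi ltac:(lia)). rewrite Ej in IHi.
      destruct (Cinf_quot a b g1 g2 n1 n2 j F Hl) as [Q Qb].
      apply (step (in_I a b) (fun t => betak g1 g2 n1 n2 j t / ell n1 n2 t) (ell n1 n2)); auto.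
      + intros; eapply Cinf_ex_derive; eauto.
      + cbv beta. rewrite Hz by (unfold j; lia). match goal with |- ?x = ?y => change (@eq R x y) end. unfold Rdiv; ring.
      + apply (Cinf_cont (in_I a b)); auto. apply (Cinf_ell a b g1 g2); auto.
      + intros s Hs. field. auto. }
  assert (Bb : BigO n (betak g1 g2 n1 n2 0)).
  { pose proof (Hdesc (n - 1)%nat ltac:(lia)) as H.
    replace (S (n - 1)) with n in H by lia. replace (n - 1 - (n - 1))%nat with 0%nat in H by lia.
    exact H. }
  destruct Bb as [db [Cb [Hdb [HCb HBb]]]].
  destruct (loc0 _ (HU 0 U0)) as [dU [HdU HUU]].
  set (dg := Rmin db dU).
  assert (Hdg : 0 < dg) by (apply Rmin_pos; auto).
  assert (Gb : forall s, Rabs s < dg ->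
     Rabs (g1 s - g1 0) <= Cb * Rabs s ^ S n /\ Rabs (g2 s - g2 0) <= Cb * Rabs s ^ S n).
  { pose proof F as [S1 [S2 _]].
    assert (Hin : forall s, Rabs s < dg -> in_I a b s /\ Rabs s < db).
    { intros s Hs; split. apply HUU. eapply Rlt_le_trans; [apply Hs| apply Rmin_r].
      eapply Rlt_le_trans; [apply Hs| apply Rmin_l]. }
    intros s Hs; split; apply pow_bound with dg; auto; intros x Hx;
      destruct (Hin x Hx) as [Hx1 Hx2];
      destruct (front_facts a b g1 g2 n1 n2 x F Hx1) as [_ [_ [G1 [G2 N]]]];
      pose proof (HBb x Hx2) as Bx; change (betak g1 g2 n1 n2 0 x) with (beta g1 g2 n1 n2 x) in Bx.
    - split. eapply Cinf_ex_derive; [apply Cinf_smooth; eauto | auto].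
      rewrite G1, Rabs_mult. assert (Rabs (- n2 x) <= 1).
      { rewrite Rabs_Ropp. apply Rabs_le. nra. }
      replace (Cb * Rabs x ^ n) with (Cb * Rabs x ^ n * 1) by ring.
      apply Rmult_le_compat; auto; apply Rabs_pos.
    - split. eapply Cinf_ex_derive; [apply Cinf_smooth; eauto | auto].
      rewrite G2, Rabs_mult. assert (Rabs (n1 x) <= 1).
      { apply Rabs_le. nra. }
      replace (Cb * Rabs x ^ n) with (Cb * Rabs x ^ n * 1) by ring.
      apply Rmult_le_compat; auto; apply Rabs_pos. }
  destruct (lip2 (g1 0) (g2 0) _ HP1) as [dP [K [HdP [HK HLip]]]].
  destruct (cont_eps g1 0 (mkposreal dP HdP)) as [dc1 [Hdc1 Hc1]].
  { apply (Cinf_cont (in_I a b)); auto. apply Cinf_smooth. apply F. }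
  destruct (cont_eps g2 0 (mkposreal dP HdP)) as [dc2 [Hdc2 Hc2]].
  { apply (Cinf_cont (in_I a b)); auto. apply Cinf_smooth. apply F. }
  destruct (loc0 _ Hpsis) as [dps [Hdps Hps]].
  destruct (loc0 _ Hphis) as [dph [Hdph Hph]].
  assert (Hpsi0 : psi 0 = 0).
  { destruct (loc0 _ Hpsiphi) as [d0 [Hd0 H0]].
    rewrite <- Hphi0 at 1. apply H0. rewrite Rabs_R0; auto. }
  destruct (cont_bound (Derive psi) 0) as [dps2 [Hdps2 Bps]].
  { apply (ex_derive_continuous (K:=R_AbsRing) (V:=R_NormedModule)).
    exact (Hps 0 ltac:(rewrite Rabs_R0; auto) 1%nat). }
  set (Kp := Rabs (Derive psi 0) + 1).
  assert (HKp : 0 <= Kp) by (unfold Kp; pose proof (Rabs_pos (Derive psi 0)); lra).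
  set (dq := Rmin dps dps2).
  assert (Hdq : 0 < dq) by (apply Rmin_pos; auto).
  assert (Lpsi : forall u, Rabs u < dq -> Rabs (psi u) <= Kp * Rabs u).
  { intros u Hu. rewrite <- (Rminus_0_r (psi u)). rewrite <- Hpsi0.
    replace (Kp * Rabs u) with (Kp * Rabs u ^ 1) by ring.
    apply pow_bound with dq; auto. intros x Hx. split.
    - exact (Hps x ltac:(eapply Rlt_le_trans; [apply Hx| apply Rmin_l]) 0%nat).
    - simpl. rewrite Rmult_1_r. apply Bps. rewrite Rminus_0_r.
      eapply Rlt_le_trans; [apply Hx| apply Rmin_r]. }
  destruct (cont_eps phi 0 (mkposreal dq Hdq)) as [dc3 [Hdc3 Hc3]].
  { apply (ex_derive_continuous (K:=R_AbsRing) (V:=R_NormedModule)).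
    exact (Hph 0 ltac:(rewrite Rabs_R0; auto) 0%nat). }
  destruct (loc0 _ Hpsiphi) as [d4 [Hd4 H4]].
  destruct (loc0 _ Heq) as [d5 [Hd5 H5]].
  set (M := Kp ^ n * (K * (2 * Cb))).
  assert (HM : 0 <= M).
  { unfold M. apply Rmult_le_pos. apply pow_le; auto. apply Rmult_le_pos; lra. }
  set (D := Rmin (Rmin dg (Rmin dc1 dc2)) (Rmin dc3 (Rmin d4 d5))).
  assert (HD : 0 < D) by (unfold D; repeat apply Rmin_pos; auto).
  set (t := Rmin (D / 2) (/ (2 * (M + 1)))).
  assert (Ht0 : 0 < t).
  { unfold t. apply Rmin_pos. lra. apply Rinv_0_lt_compat. lra. }
  assert (HtD : t < D).
  { unfold t. eapply Rle_lt_trans. apply Rmin_l. lra. }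
  assert (HtM : M * t < 1).
  { assert (t <= / (2 * (M + 1))) by apply Rmin_r.
    assert (M * t <= M * / (2 * (M + 1))) by (apply Rmult_le_compat_l; auto).
    assert (M * / (2 * (M + 1)) < 1).
    { apply (Rmult_lt_reg_r (2 * (M + 1))). lra. rewrite Rmult_assoc, Rinv_l by lra. lra. }
    lra. }
  assert (At : Rabs t = t) by (apply Rabs_pos_eq; lra).
  assert (Hmin : forall x y z, x < Rmin y z -> x < y /\ x < z).
  { intros x y z Hx; split; eapply Rlt_le_trans; try apply Hx. apply Rmin_l. apply Rmin_r. }
  assert (T : Rabs t < D) by (rewrite At; auto).
  unfold D in T.
  destruct (Hmin _ _ _ T) as [T1 T2].
  destruct (Hmin _ _ _ T1) as [Tg T3]. destruct (Hmin _ _ _ T3) as [Tc1 Tc2].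
  destruct (Hmin _ _ _ T2) as [Tc3 T4]. destruct (Hmin _ _ _ T4) as [T4' T5].
  rewrite <- (Rminus_0_r t) in Tc1, Tc2, Tc3.
  pose proof (Hc1 t Tc1) as C1. pose proof (Hc2 t Tc2) as C2. pose proof (Hc3 t Tc3) as C3.
  cbn [pos] in C1, C2, C3. rewrite Hphi0, Rminus_0_r in C3.
  rewrite Rminus_0_r in Tc1.
  destruct (Gb t Tg) as [G1 G2].
  pose proof (HLip (g1 t) (g2 t) C1 C2) as L.
  rewrite (H5 t T5), HP0 in L. unfold Cusp in L. cbn [fst] in L.
  assert (Z : 0 ^ n = 0) by (destruct n; [lia| simpl; ring]).
  rewrite Z, Rminus_0_r in L.
  rewrite <- RPow_abs in L.
  assert (P : Rabs (phi t) ^ n <= K * (2 * Cb) * t ^ S n).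
  { eapply Rle_trans. apply L. rewrite At in G1, G2.
    replace (K * (2 * Cb) * t ^ S n) with (K * (Cb * t ^ S n + Cb * t ^ S n)) by ring.
    apply Rmult_le_compat_l; auto. lra. }
  assert (Q : t <= Kp * Rabs (phi t)).
  { rewrite <- At at 1. replace (Rabs t) with (Rabs (psi (phi t))) by (rewrite (H4 t T4'); reflexivity). apply Lpsi; auto. }
  assert (R1 : t ^ n <= Kp ^ n * Rabs (phi t) ^ n).
  { rewrite <- Rpow_mult_distr. apply pow_incr. lra. }
  assert (R2 : Kp ^ n * Rabs (phi t) ^ n <= Kp ^ n * (K * (2 * Cb) * t ^ S n)).
  { apply Rmult_le_compat_l; auto. apply pow_le; auto. }
  assert (R3 : t ^ n * 1 <= t ^ n * (M * t)).
  { replace (t ^ n * (M * t)) with (Kp ^ n * (K * (2 * Cb) * t ^ S n)) by (unfold M; simpl; ring).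
    lra. }
  apply Rmult_le_reg_l in R3. lra. apply pow_lt; auto.
Qed.
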